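(* Let $m\ge0$ and $k\ge1$ be integers and $n\ge0$. Then $$\lim_{q\to-1}\frac{\sum_{j=0}^{2n}q^{(2m+1)j}\begin{bmatrix} 2n\\ j\end{bmatrix}_{q^{2k}}}{(-q;q^2)_n}=(2k)^n,\qquad \lim_{q\to-1}\frac{\sum_{j=0}^{2n+1}q^{(2m+1)j}\begin{bmatrix} 2n+1\\ j\end{bmatrix}_{q^{2k}}}{(-q;q^2)_{n+1}}=(2k)^n(2m+1).$$
   Context: $(x;q)_n=\prod_{j=0}^{n-1}(1-q^jx)$. The Gaussian binomial coefficient is $\begin{bmatrix} n\\ j\end{bmatrix}_q=\frac{(q;q)_n}{(q;q)_j(q;q)_{n-j}}$ for $0\le j\le n$, a polynomial in $q$; $\begin{bmatrix} n\\ j\end{bmatrix}_{q^{2k}}$ is this with $q$ replaced by $q^{2k}$. The quotients are rational functions of $q$ and the limits are taken as $q\to-1$. *)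

(* Defs.v *)
From Stdlib Require Import Reals.
Open Scope R_scope.

Fixpoint qpoch (x q : R) (n : nat) : R :=
  match n with
  | O => 1
  | S n' => qpoch x q n' * (1 - q ^ n' * x)
  end.

(* Gaussian binomial coefficient [n choose j]_q = (q;q)_n / ((q;q)_j (q;q)_{n-j}),
   taken literally as the quotient (valid whenever the denominator is nonzero,
   in particular for real q with |q| <> 1, i.e. in a punctured neighbourhood of -1). *)
Definition gbinom (q : R) (n j : nat) : R :=
  qpoch q q n / (qpoch q q j * qpoch q q (n - j)).

Definition numer (m k N : nat) (q : R) : R :=
  sum_f_R0 (fun j => q ^ ((2 * m + 1) * j) * gbinom (q ^ (2 * k)) N j) N.

(* Main.v *)
Require Import Defs.
From Stdlib Require Import Reals Lra Lia.
Open Scope R_scope.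

Lemma shift0 f n : sum_f_R0 f (S n) = f 0%nat + sum_f_R0 (fun j => f (S j)) n.
Proof. induction n. simpl; ring. rewrite tech5, IHn, tech5. ring. Qed.

Lemma sum_scal c f n : sum_f_R0 (fun i => c * f i) n = c * sum_f_R0 f n.
Proof. induction n; simpl; [ring|rewrite IHn; ring]. Qed.

Section RS.
Variable Q z : R.
Hypothesis HP : forall n, qpoch Q Q n <> 0.
Let P := qpoch Q Q.
Let b := gbinom Q.

Lemma Pm n : qpoch Q Q (S n) = qpoch Q Q n * (1 - Q^(S n)).
Proof. simpl. ring. Qed.

Lemma fac_nz n : 1 - Q^(S n) <> 0.
Proof. intro H. apply (HP (S n)). rewrite Pm, H. ring. Qed.

Lemma b0 N : gbinom Q N 0 = 1.
Proof. unfold gbinom. rewrite Nat.sub_0_r. simpl. field. apply HP. Qed.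

Lemma bN N : gbinom Q N N = 1.
Proof. unfold gbinom. rewrite Nat.sub_diag. simpl. field. apply HP. Qed.

Lemma B2 j r : gbinom Q (S (S (j+r))) (S j) = gbinom Q (S (j+r)) j + Q^(S j) * gbinom Q (S (j+r)) (S j).
Proof.
  unfold gbinom.
  replace (S (S (j+r)) - S j)%nat with (S r) by lia.
  replace (S (j+r) - j)%nat with (S r) by lia.
  replace (S (j+r) - S j)%nat with r by lia.
  rewrite (Pm (S (j+r))), (Pm j), (Pm r).
  replace (Q^(S (S (j+r)))) with (Q^(S j) * Q^(S r)) by (rewrite <- pow_add; f_equal; lia).
  pose proof (HP (S (j+r))). pose proof (HP j). pose proof (HP r).
  pose proof (fac_nz j). pose proof (fac_nz r).
  field. repeat split; auto.
Qed.

Lemma B3 j r : (1 - Q^(S j)) * gbinom Q (S (j+r)) (S j) = (1 - Q^(S (j+r))) * gbinom Q (j+r) j.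
Proof.
  unfold gbinom.
  replace (S (j+r) - S j)%nat with r by lia.
  replace (j+r - j)%nat with r by lia.
  rewrite (Pm (j+r)), (Pm j).
  pose proof (HP (j+r)). pose proof (HP j). pose proof (HP r).
  pose proof (fac_nz j).
  field. repeat split; auto.
Qed.

Definition H N := sum_f_R0 (fun j => z^j * gbinom Q N j) N.

Lemma RS N : H (S (S N)) = (1+z) * H (S N) - z * (1 - Q^(S N)) * H N.
Proof.
  assert (B2': forall j, (j<=N)%nat -> gbinom Q (S(S N)) (S j) = gbinom Q (S N) j + Q^(S j) * gbinom Q (S N) (S j)).
  { intros. replace N with (j + (N-j))%nat by lia. apply B2. }
  assert (B3': forall j, (j<=N)%nat -> (1 - Q^(S j)) * gbinom Q (S N) (S j) = (1 - Q^(S N)) * gbinom Q N j).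
  { intros. replace N with (j + (N-j))%nat by lia. apply B3. }
  set (S1 := sum_f_R0 (fun j => z^j * gbinom Q (S N) j) N).
  set (S2 := sum_f_R0 (fun j => z^(S j) * gbinom Q (S N) (S j)) N).
  set (S3 := sum_f_R0 (fun j => z^(S j) * Q^(S j) * gbinom Q (S N) (S j)) N).
  assert (E1 : H (S N) = S1 + z^(S N)).
  { unfold H, S1. rewrite tech5, bN. ring. }
  assert (E2 : H (S N) = 1 + S2).
  { unfold H, S2. rewrite shift0, b0. simpl. ring. }
  assert (E3 : H (S (S N)) = 1 + z * S1 + S3 + z^(S (S N))).
  { unfold H. rewrite shift0, b0, tech5, bN. cbv beta.
    rewrite (sum_eq _ (fun j => z * (z^j * gbinom Q (S N) j) + z^(S j) * Q^(S j) * gbinom Q (S N) (S j))).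
    - rewrite plus_sum, sum_scal. unfold S1, S3. simpl. ring.
    - intros. rewrite B2' by auto. simpl. ring. }
  assert (E4 : S2 - S3 = z * (1 - Q^(S N)) * H N).
  { unfold S2, S3, H. rewrite <- minus_sum.
    rewrite (sum_eq _ (fun j => z * (1 - Q^(S N)) * (z^j * gbinom Q N j))).
    - apply sum_scal.
    - intros. replace (z ^ S i * gbinom Q (S N) (S i) - z ^ S i * Q ^ S i * gbinom Q (S N) (S i))
        with (z ^ S i * ((1 - Q^(S i)) * gbinom Q (S N) (S i))) by ring.
      rewrite B3' by auto. simpl. ring. }
  rewrite <- E4, E3.
  replace ((1+z) * H (S N)) with (H (S N) + z * H (S N)) by ring.
  rewrite E2 at 1. rewrite E1. simpl. ring.
Qed.
End RS.

Fixpoint G (x:R) (n:nat) : R := match n with 0%nat => 0 | S n' => G x n' + x^n' end.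

Lemma G_geom x n : (1 - x) * G x n = 1 - x^n.
Proof. induction n; simpl. ring. rewrite Rmult_plus_distr_l, IHn. ring. Qed.

Lemma G_one n : G 1 n = INR n.
Proof. induction n; simpl G. reflexivity. rewrite IHn, pow1, S_INR. ring. Qed.

Lemma odd_pow q j : (-q)^(2*j+1) = - q^(2*j+1).
Proof. rewrite !pow_add, !pow_mult. replace ((-q)^2) with (q^2) by ring. ring. Qed.

Definition Af m q := G (-q) (2*m+1).
Definition Cf k N q := (1 - q) * G (q^2) (k*N).
Definition zf m q := q^(2*m+1).

Lemma Af_eq m q : 1 + zf m q = (1+q) * Af m q.
Proof. unfold Af, zf. replace (1+q) with (1 - - q) by ring. rewrite G_geom, odd_pow. ring. Qed.

Lemma Cf_eq k N q : 1 - (q^(2*k))^N = (1+q) * Cf k N q.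
Proof. unfold Cf. rewrite pow_mult, <- pow_mult.
  replace ((1 + q) * ((1 - q) * G (q ^ 2) (k * N))) with ((1 - q^2) * G (q^2) (k*N)) by ring.
  rewrite G_geom. reflexivity. Qed.

Fixpoint gp m k n q : R*R := match n with
 | 0%nat => (1, Af m q)
 | S n' => let e := fst (gp m k n' q) in let o := snd (gp m k n' q) in
     let e' := (1+q)*Af m q*o - zf m q * Cf k (2*n'+1) q * e in
     (e', Af m q * e' - zf m q * Cf k (2*n'+2) q * o) end.

Fixpoint EP n q := match n with 0%nat => 1 | S n' => EP n' q * G (-q) (2*n'+1) end.
Fixpoint OP n := match n with 0%nat => 1 | S n' => OP n' * INR (2*n'+1) end.

Lemma qpoch_EP n q : qpoch (-q) (q^2) n = (1+q)^n * EP n q.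
Proof. induction n; cbn [qpoch EP]. ring.
  rewrite IHn. replace (1 - (q^2)^n * - q) with (1 - (-q)^(2*n+1)).
  - rewrite <- G_geom. simpl. ring.
  - rewrite odd_pow, pow_add, pow_mult. ring. Qed.

Lemma OP_pos n : 0 < OP n.
Proof. induction n; simpl OP. lra. apply Rmult_lt_0_compat; auto. apply lt_0_INR; lia. Qed.

Lemma EP_m1 n : EP n (-1) = OP n.
Proof. induction n; simpl. reflexivity. rewrite IHn. replace (- -1) with 1 by ring. rewrite G_one. reflexivity. Qed.

Lemma gp_m1 m k n : fst (gp m k n (-1)) = INR (2*k) ^ n * OP n /\
   snd (gp m k n (-1)) = INR (2*k)^n * INR (2*m+1) * OP (S n).
Proof.
  assert (HA : Af m (-1) = INR (2*m+1)). { unfold Af. replace (- -1) with 1 by ring. apply G_one. }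
  assert (HZ : zf m (-1) = -1). { unfold zf. replace (-1) with (- (1)) by ring. rewrite odd_pow, pow1. ring. }
  assert (HC : forall N, Cf k N (-1) = 2 * INR (k*N)). { intro. unfold Cf. replace ((-1)^2) with 1 by ring. rewrite G_one. ring. }
  induction n.
  - cbn [gp fst snd OP]. rewrite HA. simpl. split; ring.
  - destruct IHn as [I1 I2]. cbn [gp fst snd]. rewrite I1, I2, HA, HZ, !HC.
    change (OP (S (S n))) with (OP (S n) * INR (2 * S n + 1)).
    change (OP (S n)) with (OP n * INR (2 * n + 1)) in *.
    change (INR (2*k) ^ S n) with (INR (2*k) * INR (2*k) ^ n).
    replace (2 * S n + 1)%nat with (2*n+3)%nat by lia.
    replace (2 * n + 2)%nat with (2*n+1+1)%nat by lia.
    rewrite !mult_INR, !plus_INR, !mult_INR.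
    replace (INR 2) with 2 by (simpl; ring). replace (INR 3) with 3 by (simpl; ring).
    rewrite INR_1. split; ring.
Qed.

Lemma numer_H m k N q : numer m k N q = H (q^(2*k)) (q^(2*m+1)) N.
Proof. unfold numer, H. apply sum_eq. intros. rewrite pow_mult. reflexivity. Qed.

Lemma HP_q q k : (1 <= k)%nat -> q <> 1 -> q <> -1 -> forall n, qpoch (q^(2*k)) (q^(2*k)) n <> 0.
Proof.
  intros hk h1 h2. assert (Hq : q^2 <> 1).
  { intro E. assert ((q-1)*(q+1) = 0) by (replace ((q-1)*(q+1)) with (q^2-1) by ring; lra).
    apply Rmult_integral in H0. destruct H0; [apply h1|apply h2]; lra. }
  assert (Hq0 : 0 <= q^2) by (rewrite <- Rsqr_pow2; apply Rle_0_sqr).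
  induction n; cbn [qpoch]. lra.
  apply Rmult_integral_contrapositive_currified; auto.
  replace ((q^(2*k))^n * q^(2*k)) with ((q^2)^(k * S n)).
  2:{ rewrite <- !pow_mult, <- pow_add. f_equal. lia. }
  destruct (Rlt_or_le (q^2) 1) as [H0|H0].
  - pose proof (pow_lt_1_compat (q^2) (k * S n) (conj Hq0 H0)) as HH. lapply HH; [intros ? ?; lra| lia].
  - assert (X1: 1 < q^2) by lra. pose proof (Rlt_pow_R1 (q^2) (k*S n) X1) as HH. lapply HH; [intros ? ?; lra|lia].
Qed.

Lemma numer_gp m k n q : (1 <= k)%nat -> q <> 1 -> q <> -1 ->
  numer m k (2*n) q = (1+q)^n * fst (gp m k n q) /\
  numer m k (2*n+1) q = (1+q)^(n+1) * snd (gp m k n q).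
Proof.
  intros hk h1 h2. pose proof (HP_q q k hk h1 h2) as HP.
  rewrite !numer_H.
  induction n.
  - split.
    + unfold H. simpl. rewrite b0 by auto. ring.
    + unfold H. replace (2*0+1)%nat with 1%nat by lia. cbn [sum_f_R0 gp snd].
      rewrite b0, bN by auto.
      replace ((1+q)^(0+1) * Af m q) with (1 + zf m q) by (rewrite Af_eq; simpl; ring). unfold zf. ring.
  - destruct IHn as [I1 I2].
    replace (2 * S n)%nat with (S (S (2*n))) by lia.
    replace (2 * S n + 1)%nat with (S (S (S (2*n)))) by lia.
    replace (2*n+1)%nat with (S (2*n)) in I2 by lia.
    assert (E1 : H (q ^ (2 * k)) (q ^ (2 * m + 1)) (S (S (2*n))) = (1 + q) ^ S n * fst (gp m k (S n) q)).
    { rewrite RS by auto. rewrite I1, I2. cbn [gp fst snd].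
      change (q^(2*m+1)) with (zf m q). rewrite Af_eq, Cf_eq.
      replace (2*n+1)%nat with (S (2*n)) by lia.
      replace (n+1)%nat with (S n) by lia. simpl pow. ring. }
    split; auto.
    replace (S (S (2 * n)) + 1)%nat with (S (S (S (2*n)))) by lia. rewrite RS by auto. rewrite E1, I2. cbn [gp fst snd].
    change (q^(2*m+1)) with (zf m q). rewrite Af_eq, Cf_eq.
    replace (2*n+2)%nat with (S (S (2*n))) by lia.
    replace (2*n+1)%nat with (S (2*n)) by lia.
    replace (S n + 1)%nat with (S (S n)) by lia.
    replace (n+1)%nat with (S n) by lia. simpl pow. ring.
Qed.

Lemma cpt_plus f g x : continuity_pt f x -> continuity_pt g x -> continuity_pt (fun y => f y + g y) x.
Proof. intros; exact (continuity_pt_plus f g x H0 H1). Qed.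
Lemma cpt_minus f g x : continuity_pt f x -> continuity_pt g x -> continuity_pt (fun y => f y - g y) x.
Proof. intros; exact (continuity_pt_minus f g x H0 H1). Qed.
Lemma cpt_mult f g x : continuity_pt f x -> continuity_pt g x -> continuity_pt (fun y => f y * g y) x.
Proof. intros; exact (continuity_pt_mult f g x H0 H1). Qed.
Lemma cpt_opp f x : continuity_pt f x -> continuity_pt (fun y => - f y) x.
Proof. intros; exact (continuity_pt_opp f x H0). Qed.
Lemma cpt_div f g x : continuity_pt f x -> continuity_pt g x -> g x <> 0 -> continuity_pt (fun y => f y / g y) x.
Proof. intros; exact (continuity_pt_div f g x H0 H1 H2). Qed.
Lemma cpt_const c x : continuity_pt (fun _ => c) x.
Proof. apply continuity_pt_const. intros a b; reflexivity. Qed.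
Lemma cpt_id x : continuity_pt (fun y => y) x.
Proof. apply derivable_continuous_pt. apply derivable_pt_id. Qed.
Lemma cpt_pow f n x : continuity_pt f x -> continuity_pt (fun y => f y ^ n) x.
Proof. intro. induction n; cbn [pow]. apply cpt_const. apply cpt_mult; auto. Qed.
Lemma cpt_G f n x : continuity_pt f x -> continuity_pt (fun y => G (f y) n) x.
Proof. intro. induction n; cbn [G]. apply cpt_const. apply cpt_plus; auto. apply cpt_pow; auto. Qed.

Ltac cont := repeat first [ apply cpt_plus | apply cpt_minus | apply cpt_mult | apply cpt_opp
   | apply cpt_id | apply cpt_const | apply cpt_pow | apply cpt_G ].

Lemma cpt_Af m x : continuity_pt (Af m) x.
Proof. unfold Af. apply (cpt_G (fun y => - y)). cont. Qed.
Lemma cpt_Cf k N x : continuity_pt (Cf k N) x.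
Proof. unfold Cf. cont. Qed.
Lemma cpt_zf m x : continuity_pt (zf m) x.
Proof. unfold zf. cont. Qed.
Lemma cpt_EP n x : continuity_pt (EP n) x.
Proof. induction n; cbn [EP]. apply cpt_const. apply cpt_mult; auto. apply (cpt_G (fun y => - y)). cont. Qed.

Lemma cpt_gp m k n x : continuity_pt (fun q => fst (gp m k n q)) x /\ continuity_pt (fun q => snd (gp m k n q)) x.
Proof.
  induction n; cbn [gp fst snd].
  - split. apply cpt_const. apply cpt_Af.
  - destruct IHn as [I1 I2].
    assert (E: continuity_pt (fun q => (1+q)*Af m q* snd (gp m k n q) - zf m q * Cf k (2*n+1) q * fst (gp m k n q)) x).
    { cont; auto using cpt_Af, cpt_Cf, cpt_zf. }
    split; auto.
    apply cpt_minus. apply cpt_mult. apply cpt_Af. exact E.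
    cont; auto using cpt_Af, cpt_Cf, cpt_zf.
Qed.

Lemma lim_from (f h e : R -> R) l :
  continuity_pt h (-1) -> continuity_pt e (-1) -> e (-1) <> 0 -> h (-1) = l ->
  (forall x, x <> -1 -> x <> 1 -> e x <> 0 -> f x = h x) ->
  limit1_in f (fun q => q <> -1) l (-1).
Proof.
  intros Ch Ce He Hl Hf.
  unfold continuity_pt, continue_in, limit1_in, limit_in in *. simpl in *. unfold R_dist in *.
  intros eps Heps.
  destruct (Ch eps Heps) as [a1 [Ha1 A1]].
  destruct (Ce (Rabs (e (-1)))) as [a2 [Ha2 A2]]. apply Rabs_pos_lt; auto.
  exists (Rmin a1 (Rmin a2 1)). split. repeat apply Rmin_pos; lra.
  intros x [Hx Hd].
  assert (d1 : Rabs (x - -1) < a1) by (eapply Rlt_le_trans; [exact Hd|apply Rmin_l]).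
  assert (d2 : Rabs (x - -1) < a2) by (eapply Rlt_le_trans; [exact Hd|eapply Rle_trans; [apply Rmin_r|apply Rmin_l]]).
  assert (d3 : Rabs (x - -1) < 1) by (eapply Rlt_le_trans; [exact Hd|eapply Rle_trans; [apply Rmin_r|apply Rmin_r]]).
  rewrite Hf.
  - rewrite <- Hl. apply A1. split; auto. unfold D_x, no_cond. split; auto.
  - exact Hx.
  - intro E. rewrite E in d3. rewrite Rabs_right in d3; lra.
  - intro E. assert (Rabs (e x - e (-1)) < Rabs (e (-1))).
    { apply A2. split; auto. unfold D_x, no_cond. split; auto. }
    rewrite E in H0. replace (0 - e (-1)) with (- e (-1)) in H0 by ring. rewrite Rabs_Ropp in H0. lra.
Qed.

Theorem corollary2p4 (m k n : nat) (hk : (1 <= k)%nat) :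
  limit1_in (fun q => numer m k (2 * n) q / qpoch (- q) (q ^ 2) n)
            (fun q => q <> -1) (INR (2 * k) ^ n) (-1)
  /\
  limit1_in (fun q => numer m k (2 * n + 1) q / qpoch (- q) (q ^ 2) (n + 1))
            (fun q => q <> -1) (INR (2 * k) ^ n * INR (2 * m + 1)) (-1).
Proof.
  pose proof (OP_pos n) as O1. pose proof (OP_pos (S n)) as O2.
  destruct (gp_m1 m k n) as [V1 V2].
  split.
  - apply (lim_from _ (fun q => fst (gp m k n q) / EP n q) (EP n)).
    + apply cpt_div. apply cpt_gp. apply cpt_EP. rewrite EP_m1. lra.
    + apply cpt_EP.
    + rewrite EP_m1. lra.
    + rewrite V1, EP_m1. field. lra.
    + intros x h2 h1 he. destruct (numer_gp m k n x hk h1 h2) as [N1 _].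
      rewrite N1, qpoch_EP. field. split; auto. apply pow_nonzero. intro; apply h2; lra.
  - apply (lim_from _ (fun q => snd (gp m k n q) / EP (S n) q) (EP (S n))).
    + apply cpt_div. apply cpt_gp. apply cpt_EP. rewrite EP_m1. lra.
    + apply cpt_EP.
    + rewrite EP_m1. lra.
    + rewrite V2, EP_m1. field. lra.
    + intros x h2 h1 he. destruct (numer_gp m k n x hk h1 h2) as [_ N2].
      rewrite N2, qpoch_EP. replace (n+1)%nat with (S n) by lia. field. split; auto. apply pow_nonzero. intro; apply h2; lra.
Qed.
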